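(* Let $u,\alpha\in k[T]$ satisfy $P_2(T)^p-P_2^\sigma(T^p)=m_p\bigl(\bar P'(T)^p u(T)-2\alpha(T)\bar P(T)^p\bigr)$, and let $v,\beta\in k[T]$ satisfy $Q_2(T)^p-Q_2^\sigma(T^p)=m_p\bigl(\bar Q'(T)^p v(T)-2\beta(T)\bar Q(T)^p\bigr)$. For $0\leq i\leq g-1$ set $$f_U=x^{ip}\,\frac{x^{p-1}+u'(x)}{y^{p-1}}\,\frac{dx}{y},\quad f_V=-x_1^{p(g-1-i)}\,\frac{x_1^{p-1}+v'(x_1)}{t^{p-1}}\,\frac{dx_1}{t},\quad h=x^{ip}\,\frac{u(x)+x^{2p}v(x_1)}{y^p}.$$ Then $f_U\in\Omega^1_{U_0/k}$, $f_V\in\Omega^1_{V_0/k}$ (i.e. they are regular differentials on $U_0$, resp. $V_0$), $h\in\mathcal{O}(U_0\cap V_0)$, and $$f_V-f_U+dh=0.$$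
   Context: $k$ is a finite field of characteristic $p\neq 2$, $W_2(k)=W(k)/p^2$, $\sigma$ the Frobenius of $W_2(k)$; for $Q=\sum b_jT^j$, $Q^\sigma=\sum\sigma(b_j)T^j$; $m_p:k[T]\to W_2(k)[T]$ is induced by multiplication by $p$. Let $P\in W(k)[X]$ be monic of odd degree $d=2g+1$, separable over $\operatorname{Frac}W(k)$, with separable reduction $\bar P\in k[X]$; $P_2$ is its reduction mod $p^2$, $Q_2(x_1)=x_1^{d+1}P_2(1/x_1)$, $\bar Q(x_1)=x_1^{d+1}\bar P(1/x_1)$. $X_0$ is the curve over $k$ obtained by gluing $U_0=\operatorname{Spec}k[x,y]/(y^2-\bar P(x))$ and $V_0=\operatorname{Spec}k[x_1,t]/(t^2-\bar Q(x_1))$ along $x_1=1/x$, $t=y/x^{g+1}$. (These pairs $(u,\alpha)$ and $(v,\beta)$ define lifts of Frobenius $x\mapsto x^p+p\,u(x)$, $y\mapsto y^p+y^p p\,\alpha(x)$ on $U_1$ and $x_1\mapsto x_1^p+p\,v(x_1)$, $t\mapsto t^p+t^p p\,\beta(x_1)$ on $V_1$; the triple $(f_U,f_V,h)$ is the image of $x^i\,dx/y$ under the associated Deligne–Illusie map.) *)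

(* Defs.v *)
From HB Require Import structures.
From mathcomp Require Import all_boot all_order all_algebra all_field.
Set Implicit Arguments. Unset Strict Implicit. Unset Printing Implicit Defensive.
Import GRing.Theory.
Local Open Scope ring_scope.

Definition evp (k K : fieldType) (iota : {rmorphism k -> K}) (q : {poly k}) (z : K) : K :=
  (map_poly iota q).[z].

Definition ev2 (k K : fieldType) (iota : {rmorphism k -> K})
  (F : {poly {poly k}}) (z w : K) : K :=
  (map_poly (fun c => evp iota c z) F).[w].

(* a lies in the image of k[X,Y] -> K, X |-> z, Y |-> w, i.e. the coordinate
   ring O(U) = k[z,w] of the affine chart, viewed inside the function field K. *)
Definition in_coord (k K : fieldType) (iota : {rmorphism k -> K}) (z w a : K) : Prop :=
  exists F : {poly {poly k}}, a = ev2 iota F z w.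

Definition in_localization (k K : fieldType) (iota : {rmorphism k -> K}) (z w a : K) : Prop :=
  exists (n : nat) (b : K), in_coord iota z w b /\ a = b / z ^+ n.

(* Meromorphic 1-forms on the curve are written  f dx  (dx a basis of the
   1-dimensional K-space Omega^1_K), and represented by the coefficient f.
   The Kaehler derivation d : K -> Omega^1_K is  d a = (D a) dx  where D is the
   derivation of K with D x = 1.  The 1-form f dx is regular on the affine chart
   with coordinate ring k[z,w] iff it is in the image of Omega^1_{k[z,w]/k},
   i.e. it is a finite sum  sum a_j d b_j  with a_j, b_j in k[z,w]. *)
Definition regular_form (k K : fieldType) (iota : {rmorphism k -> K}) (D : K -> K)
  (z w f : K) : Prop :=
  exists s : seq (K * K),
    (forall ab, ab \in s -> in_coord iota z w ab.1 /\ in_coord iota z w ab.2) /\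
    f = \sum_(ab <- s) ab.1 * D ab.2.

(* R = m_p(Q) in W_2(k)[T]: R is p times a lift of Q. *)
Definition is_mp (W : comNzRingType) (k : fieldType) (p : nat)
  (pi : {rmorphism W -> k}) (Q : {poly k}) (R : {poly W}) : Prop :=
  exists L : {poly W}, map_poly pi L = Q /\ R = p%:R *: L.

(* recip d P = x^(d+1) P(1/x)  for P of degree <= d. *)
Definition recip (R : nzRingType) (d : nat) (P : {poly R}) : {poly R} :=
  \poly_(m < d.+2) P`_(d.+1 - m).

(* Main.v *)
Require Import Defs.
From HB Require Import structures.
From mathcomp Require Import all_boot all_order all_algebra all_field.
From mathcomp Require Import zify ring.
Import GRing.Theory.
Local Open Scope ring_scope.
Set Implicit Arguments. Unset Strict Implicit. Unset Printing Implicit Defensive.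
Definition Rv (R : nzSemiRingType) (n : nat) (F : {poly R}) : {poly R} :=
  \poly_(m < n.+1) F`_(n - m).
Arguments Rv {R}.

Section RvTheory.
Variable R : comNzRingType.
Implicit Types F G : {poly R}.

Lemma RvD n F G : Rv n (F + G) = Rv n F + Rv n G.
Proof. by apply/polyP=> j; rewrite !(coefD, coef_poly); case: ifP; rewrite ?addr0. Qed.

Lemma Rv0 n : Rv n (0 : {poly R}) = 0.
Proof. by apply/polyP=> j; rewrite coef_poly !coef0 if_same. Qed.

Lemma RvZ n c F : Rv n (c *: F) = c *: Rv n F.
Proof. by apply/polyP=> j; rewrite !(coefZ, coef_poly); case: ifP; rewrite ?mulr0. Qed.

Lemma RvN n F : Rv n (- F) = - Rv n F.
Proof. by rewrite -!scaleN1r RvZ. Qed.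

Lemma RvB n F G : Rv n (F - G) = Rv n F - Rv n G.
Proof. by rewrite RvD RvN. Qed.

Lemma Rv_sum n (I : Type) (r : seq I) (P : pred I) (E : I -> {poly R}) :
  Rv n (\sum_(i <- r | P i) E i) = \sum_(i <- r | P i) Rv n (E i).
Proof. exact: (big_morph (Rv n) (RvD n) (Rv0 n)). Qed.

Lemma RvXn n a : (a <= n)%N -> Rv n ('X^a : {poly R}) = 'X^(n - a).
Proof.
move=> han; apply/polyP=> j; rewrite coef_poly !coefXn.
case: ltnP => hj.
  congr (_%:R); apply/eqP/eqP; lia.
have -> : (j == n - a)%N = false by apply/eqP; lia.
by [].
Qed.

Lemma poly_expand n F : (size F <= n.+1)%N ->
  F = \sum_(j < n.+1) F`_j *: 'X^j.
Proof.
move=> hs; rewrite -poly_def; apply/polyP=> j; rewrite coef_poly.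
case: ltnP => // hj; apply: nth_default; exact: leq_trans hs hj.
Qed.

Lemma Rv_expand n F : (size F <= n.+1)%N ->
  Rv n F = \sum_(j < n.+1) F`_j *: 'X^(n - j).
Proof.
move=> hs; rewrite {1}(poly_expand hs) Rv_sum; apply: eq_bigr => j _.
by rewrite RvZ RvXn // -ltnS.
Qed.

Lemma RvM n m F G : (size F <= n.+1)%N -> (size G <= m.+1)%N ->
  Rv (n + m) (F * G) = Rv n F * Rv m G.
Proof.
move=> hF hG.
rewrite (Rv_expand hF) (Rv_expand hG) {1}(poly_expand hF) {1}(poly_expand hG).
rewrite !big_distrlr Rv_sum; apply: eq_bigr => j _.
rewrite Rv_sum; apply: eq_bigr => l _.
rewrite /= -scalerAl -scalerAr scalerA -exprD RvZ RvXn; last first.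
  have := ltn_ord j; have := ltn_ord l; lia.
rewrite -scalerAl -scalerAr scalerA -exprD; congr (_ *: 'X^_).
have := ltn_ord j; have := ltn_ord l; lia.
Qed.

Lemma RvX k n F : (size F <= n.+1)%N -> Rv (k * n) (F ^+ k) = Rv n F ^+ k.
Proof.
move=> hF; elim: k => [|k IH].
  by rewrite mul0n !expr0 -(expr0 'X) RvXn.
rewrite !exprSr mulSnr RvM ?IH //.
apply: leq_trans (size_poly_exp_leq _ _) _; rewrite ltnS.
have : ((size F).-1 <= n)%N by rewrite -ltnS; case: (size F) hF.
by move=> h; rewrite mulnC leq_mul2l h orbT.
Qed.

Lemma Rv_comp q n F : (0 < q)%N -> (size F <= n.+1)%N ->
  Rv (q * n) (F \Po 'X^q) = (Rv n F) \Po 'X^q.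
Proof.
move=> hq hF; rewrite (Rv_expand hF) {1}(poly_expand hF).
rewrite (big_morph (fun G => G \Po 'X^q) (fun a b => comp_polyD a b _) (comp_poly0 _)).
rewrite (big_morph (fun G => G \Po 'X^q) (fun a b => comp_polyD a b _) (comp_poly0 _)).
rewrite Rv_sum; apply: eq_bigr => j _.
rewrite !comp_polyZ !comp_Xn_poly -!exprM RvZ RvXn; last first.
  have := ltn_ord j; rewrite ltnS => h; exact: leq_mul.
by rewrite -mulnBr.
Qed.

End RvTheory.

Lemma Rv_map (R S : comNzRingType) (f : {rmorphism R -> S}) n (F : {poly R}) :
  map_poly f (Rv n F) = Rv n (map_poly f F).
Proof.
apply/polyP=> j; rewrite coef_map_id0 ?rmorph0 // !coef_poly.
case: (j < n.+1)%N; last by rewrite rmorph0.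
by case: ltnP => h //; rewrite nth_default ?rmorph0.
Qed.

Lemma Rv_horner (K : fieldType) n (F : {poly K}) z : z != 0 ->
  (size F <= n.+1)%N -> (Rv n F).[z^-1] = z ^- n * F.[z].
Proof.
move=> hz hF; rewrite (Rv_expand hF) {2}(poly_expand hF) !horner_sum mulr_sumr.
apply: eq_bigr => j _; rewrite !hornerZ !hornerXn mulrCA; congr (_ * _).
have hj : (j <= n)%N by rewrite -ltnS.
have e : z ^+ n = z ^+ (n - j) * z ^+ j by rewrite -exprD subnK.
rewrite e invfM exprVn -mulrA mulVf ?mulr1 // expf_neq0 //.
Qed.

Lemma frob_poly (R : comNzRingType) p (chp : p \in [pchar R]) (G : {poly R}) :
  G ^+ p = map_poly (pFrobenius_aut chp) G \Po 'X^p.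
Proof.
have chP : p \in [pchar {poly R}] := rmorph_pchar polyC chp.
have p0 : (0 < p)%N by apply: prime_gt0; exact: pcharf_prime chp.
elim/poly_ind: G => [|q c IH].
  by rewrite rmorph0 comp_poly0 expr0n; move: p0; rewrite lt0n => /negPf ->.
rewrite -(pFrobenius_autE chP) rmorphD /= !pFrobenius_autE exprMn IH.
rewrite rmorphD rmorphM /= map_polyX map_polyC /= comp_polyD comp_polyM comp_polyX comp_polyC.
by rewrite -polyC_exp pFrobenius_autE.
Qed.

Lemma deriv_rel (W : comNzRingType) (k : fieldType) (p : nat)
  (pi : {rmorphism W -> k}) (sigma : {rmorphism W -> W}) (chp : p \in [pchar k])
  (F : {poly W}) (w gam : {poly k}) :
  (forall z : W, p%:R * z = 0 -> pi z = 0) ->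
  (forall a : W, pi (sigma a) = pi a ^+ p) ->
  is_mp p pi ((map_poly pi F)^`() ^+ p * w - 2%:R * gam * (map_poly pi F) ^+ p)
    (F ^+ p - (map_poly sigma F \Po 'X^p)) ->
  (map_poly pi F)^`() ^+ p * ('X^(p.-1) + w^`()) =
  (map_poly pi F) ^+ p.-1 * ((map_poly pi F)^`() + 2%:R * gam^`() * map_poly pi F).
Proof.
move=> hker hsig [L [hL hR]].
set Fb := map_poly pi F.
have chP : p \in [pchar {poly k}] := rmorph_pchar polyC chp.
have p0 : (0 < p)%N by apply: prime_gt0; exact: pcharf_prime chp.
have hD := congr1 deriv hR.
rewrite derivB deriv_exp deriv_comp derivXn derivZ -!scaler_nat in hD.
set E := F^`() * F ^+ p.-1 - ((map_poly sigma F)^`() \Po 'X^p) * 'X^(p.-1) - L^`().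
have hE : p%:R *: E = 0.
  by rewrite -scalerAr in hD; rewrite /E !scalerBr hD subrr.
have hmE : map_poly pi E = 0.
  apply/polyP => j; rewrite coef_map coef0; apply: hker.
  by have := congr1 (fun P : {poly W} => P`_j) hE; rewrite coefZ coef0.
have hs : map_poly pi (map_poly sigma F) = map_poly (pFrobenius_aut chp) Fb.
  by apply/polyP => j; rewrite !coef_map /= hsig pFrobenius_autE.
rewrite /E !rmorphB !rmorphM /= map_comp_poly /= !map_polyXn -!deriv_map hs hL rmorphXn /=  in hmE.
rewrite (deriv_map (pFrobenius_aut chp)) -frob_poly in hmE.
rewrite !derivE /= !deriv_exp !(mulrn_pchar chP) -/Fb in hmE.
have eP : Fb ^+ p = Fb ^+ p.-1 * Fb by rewrite -exprSr prednK.
rewrite eP in hmE.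
apply/eqP; rewrite -subr_eq0; apply/eqP; rewrite -oppr0 -[in RHS]hmE.
ring.
Qed.

Lemma coef_Rv (R : nzSemiRingType) n (F : {poly R}) j :
  (Rv n F)`_j = if (j < n.+1)%N then F`_(n - j) else 0.
Proof. exact: coef_poly. Qed.

Lemma Rv_deriv (R : comNzRingType) d (F : {poly R}) :
  Rv d F^`() = Rv d.+1 F *+ d.+1 - 'X * (Rv d.+1 F)^`().
Proof.
apply/polyP => j; rewrite coefB coefMn coefXM.
case: j => [|j] /=.
  by rewrite !coef_Rv /= coef_deriv subn0 subr0.
rewrite coef_deriv !coef_Rv.
case: (ltnP j d) => hj.
  have -> : (j.+1 < d.+1)%N by [].
  have -> : (j.+1 < d.+2)%N by lia.
  rewrite coef_deriv.
  have -> : (d - j.+1).+1 = (d.+1 - j.+1)%N by lia.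
  rewrite -mulrnBr; last by lia.
  congr (_ *+ _); lia.
have -> : (j.+1 < d.+1)%N = false by apply/negbTE; rewrite -leqNgt; lia.
case: (ltnP j.+1 d.+2) => h2.
  have -> : (d.+1 - j.+1 = 0)%N by lia.
  have -> : j = d by lia.
  by rewrite subrr.
by rewrite !mul0rn subrr.
Qed.

Lemma coprime_Rv (k : fieldType) d (P : {poly k}) :
  size P = d.+1 -> P`_d = 1 -> coprimep P P^`() ->
  coprimep (Rv d.+1 P) (Rv d.+1 P)^`().
Proof.
move=> sP lP /Bezout_eq1_coprimepP [[A B] /= hAB].
set Q := Rv d.+1 P.
have P0 : P != 0 by rewrite -size_poly_gt0 sP.
have sP' : (size P^`() <= d.+1)%N.
  by apply: ltnW; rewrite -sP; apply: lt_size_deriv.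
set a := size A; set b := size B.
have hA : (size A <= (a + b).+1)%N by rewrite /a; lia.
have hB : (size B <= (a + b).+1.+1)%N by rewrite /b; lia.
have e1 : Rv ((a + b) + d.+1)%N (A * P) = Rv (a + b) A * Q.
  by rewrite RvM // sP.
have e2 : Rv ((a + b) + d.+1)%N (B * P^`()) = Rv (a + b).+1 B * Rv d P^`().
  by rewrite -addSnnS RvM.
have eN : 'X^((a + b) + d.+1)%N =
   (Rv (a + b) A + Rv (a + b).+1 B *+ d.+1) * Q - (Rv (a + b).+1 B * 'X) * Q^`().
  rewrite -(subn0 (a + b + d.+1)%N) -RvXn // expr0 -hAB RvD e1 e2 Rv_deriv -/Q.
  rewrite /Q; set q := Rv d.+1 P; set rA := Rv (a + b) A; set rB := Rv (a + b).+1 B.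
  by rewrite mulrBr mulrDl -mulrA mulrnAr mulrnAl addrA.
have cX : coprimep 'X Q^`().
  rewrite coprimep_sym -['X]subr0 -polyC0 coprimep_XsubC /root horner_coef0.
  rewrite coef_deriv coef_Rv /= subSS subn0 lP mulr1n; exact: oner_neq0.
have cXN := coprimep_expl ((a + b) + d.+1)%N cX.
apply/coprimepP => dv h1 h2.
move/coprimepP: cXN; apply => //.
rewrite eN; apply: dvdp_sub; exact: dvdp_mull.
Qed.

Definition isDer (k K : fieldType) (iota : {rmorphism k -> K}) (D : K -> K) :=
  [/\ forall a b, D (a + b) = D a + D b, forall a b, D (a * b) = a * D b + b * D a
    & forall c, D (iota c) = 0].

Lemma evpE (k K : fieldType) (iota : {rmorphism k -> K}) q z :
  evp iota q z = (map_poly iota q).[z].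
Proof. by []. Qed.

Lemma D0 k K iota D : @isDer k K iota D -> D 0 = 0.
Proof. by case=> DD _ _; apply: (addrI (D 0)); rewrite -DD !addr0. Qed.

Lemma D1 k K iota D : @isDer k K iota D -> D 1 = 0.
Proof. by case=> _ _ DC; rewrite -(rmorph1 iota) DC. Qed.

Lemma DN k K iota D : @isDer k K iota D -> forall a, D (- a) = - D a.
Proof.
move=> hD a; have [DD _ _] := hD; apply: (addrI (D a)).
by rewrite -DD !subrr (D0 hD).
Qed.

Lemma DXS k K iota D : @isDer k K iota D -> forall a n,
  D (a ^+ n.+1) = a ^+ n * D a *+ n.+1.
Proof.
move=> hD a n; have [_ DM _] := hD; elim: n => [|n IH]; first by rewrite expr1 expr0 mul1r.
by rewrite exprS DM IH mulrnAr mulrA -exprS mulrC -mulrSr.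
Qed.

Lemma DX k K iota D : @isDer k K iota D -> forall a n,
  D (a ^+ n) = a ^+ n.-1 * D a *+ n.
Proof. by move=> hD a [|n]; [rewrite expr0 (D1 hD) mulr0n | rewrite (DXS hD)]. Qed.

Lemma DV k K iota D : @isDer k K iota D -> forall a, a != 0 ->
  D (a ^-1) = - (D a / a ^+ 2).
Proof.
move=> hD a a0; have [_ DM _] := hD.
have := DM a a^-1; rewrite mulfV // (D1 hD) => /eqP; rewrite eq_sym addr_eq0 => /eqP h.
have -> : D a^-1 = a^-1 * (a * D a^-1) by rewrite mulrA mulVf ?mul1r.
by rewrite h; field.
Qed.

Lemma D_evp k K iota D : @isDer k K iota D -> forall q z,
  D (evp iota q z) = evp iota q^`() z * D z.
Proof.
move=> hD q z; have [DD DM DC] := hD.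
elim/poly_ind: q => [|q c IH]; first by rewrite deriv0 /evp !rmorph0 !horner0 (D0 hD) mul0r.
rewrite derivMXaddC /evp !rmorphD !rmorphM /= map_polyX map_polyC /= !hornerE.
rewrite DD DC addr0 DM -!/(evp _ _ _) IH; ring.
Qed.

Lemma in_coord_mon (k K : fieldType) (iota : {rmorphism k -> K}) z w q n :
  in_coord iota z w (evp iota q z * w ^+ n).
Proof.
exists (q%:P * 'X^n); rewrite /ev2.
have -> : map_poly (fun c => evp iota c z) (q%:P * 'X^n) = (evp iota q z)%:P * 'X^n.
  apply/polyP => j; rewrite coef_map_id0; last by rewrite /evp rmorph0 horner0.
  rewrite !coefCM !coefXn; case: (j == n); first by rewrite !mulr1.
  by rewrite !mulr0 /evp rmorph0 horner0.
by rewrite hornerCM hornerXn.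
Qed.



Lemma evpD (k K : fieldType) (iota : {rmorphism k -> K}) q1 q2 z :
  evp iota (q1 + q2) z = evp iota q1 z + evp iota q2 z.
Proof. by rewrite /evp rmorphD hornerD. Qed.
Lemma evpB (k K : fieldType) (iota : {rmorphism k -> K}) q1 q2 z :
  evp iota (q1 - q2) z = evp iota q1 z - evp iota q2 z.
Proof. by rewrite /evp rmorphB hornerD hornerN. Qed.
Lemma evpN (k K : fieldType) (iota : {rmorphism k -> K}) q z :
  evp iota (- q) z = - evp iota q z.
Proof. by rewrite /evp rmorphN hornerN. Qed.
Lemma evpM (k K : fieldType) (iota : {rmorphism k -> K}) q1 q2 z :
  evp iota (q1 * q2) z = evp iota q1 z * evp iota q2 z.
Proof. by rewrite /evp rmorphM hornerM. Qed.
Lemma evpXn (k K : fieldType) (iota : {rmorphism k -> K}) n z :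
  evp iota 'X^n z = z ^+ n.
Proof. by rewrite /evp map_polyXn hornerXn. Qed.
Lemma evpX (k K : fieldType) (iota : {rmorphism k -> K}) z :
  evp iota 'X z = z.
Proof. by rewrite /evp map_polyX hornerX. Qed.
Lemma evp_exp (k K : fieldType) (iota : {rmorphism k -> K}) q n z :
  evp iota (q ^+ n) z = evp iota q z ^+ n.
Proof. by rewrite /evp rmorphXn horner_exp. Qed.
Lemma evp_nat (k K : fieldType) (iota : {rmorphism k -> K}) n z :
  evp iota n%:R z = n%:R.
Proof. by rewrite /evp rmorph_nat -polyC_natr hornerC. Qed.

Unset Implicit Arguments.
Theorem mainTheorem13
  (k : finFieldType) (p : nat)
  (W : comNzRingType) (pi : {rmorphism W -> k}) (sigma : {rmorphism W -> W})
  (g : nat) (P2 : {poly W}) (u alpha v beta : {poly k})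
  (K : fieldType) (iota : {rmorphism k -> K}) (D : K -> K) (x y : K) (i : nat) :
  prime p -> p \in [pchar k] -> p != 2%N ->
  (p ^ 2)%:R = 0 :> W ->
  (forall a : k, exists w : W, pi w = a) ->
  (forall w : W, pi w = 0 <-> exists z : W, w = p%:R * z) ->
  (forall z : W, p%:R * z = 0 -> pi z = 0) ->
  (forall w : W, pi (sigma w) = pi w ^+ p) ->
  P2 \is monic -> size P2 = (2 * g + 1).+1 ->
  separable_poly (map_poly pi P2) ->
  let d := (2 * g + 1)%N in
  let Pb := map_poly pi P2 in
  let Q2 := recip d P2 in
  let Qb := recip d Pb in
  is_mp p pi (Pb^`() ^+ p * u - 2%:R * alpha * Pb ^+ p)
             (P2 ^+ p - ((map_poly sigma P2) \Po 'X^p)) ->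
  is_mp p pi (Qb^`() ^+ p * v - 2%:R * beta * Qb ^+ p)
             (Q2 ^+ p - ((map_poly sigma Q2) \Po 'X^p)) ->
  (forall q : {poly k}, q != 0 -> evp iota q x != 0) ->
  y ^+ 2 = evp iota Pb x ->
  (forall a b, D (a + b) = D a + D b) ->
  (forall a b, D (a * b) = a * D b + b * D a) ->
  (forall c : k, D (iota c) = 0) ->
  D x = 1 ->
  (i < g)%N ->
  let x1 := x^-1 in
  let t := y / x ^+ (g + 1) in
  let fU := x ^+ (i * p) * ((x ^+ (p - 1) + evp iota u^`() x) / y ^+ (p - 1)) * (1 / y) in
  let fV := - (x1 ^+ (p * (g - 1 - i)) * ((x1 ^+ (p - 1) + evp iota v^`() x1) / t ^+ (p - 1))
               * (1 / t) * D x1) in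
  let h := x ^+ (i * p) * ((evp iota u x + x ^+ (2 * p) * evp iota v x1) / y ^+ p) in
  [/\ regular_form iota D x y fU,
      regular_form iota D x1 t fV,
      in_localization iota x y h
    & fV - fU + D h = 0].
Proof.
move=> hp chp hp2 _ _ _ hker hsig hmon hsize hsep d Pb Q2 Qb hmpP hmpQ htr hy DD DM DC hDx hig.
move=> x1 t fU fV h.
have hD : isDer iota D by split.
have chK : p \in [pchar K] := rmorph_pchar iota chp.
have pK : p%:R = 0 :> K := pcharf0 chK.
have p2 : (2 < p)%N.
  by have := prime_gt1 hp; move: hp2; case: p {hp chp chK pK hmpP hmpQ hsig hker fU fV h} => [|[|[|]]].
set m := p./2.
have hpm : p = m.*2.+1.
  have [e|o] := even_prime hp; first by rewrite e in hp2.
  by rewrite -[LHS]odd_double_half o /m add1n.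
have m0 : (0 < m)%N by rewrite /m; move: p2 hpm; lia.
have x0 : x != 0.
  by have := htr 'X (negbT (polyX_eq0 _)); rewrite /evp map_polyX hornerX.
have lP : Pb`_d = 1.
  have -> : d = (size P2).-1 by rewrite hsize.
  by rewrite /Pb coef_map /= -lead_coefE (monicP hmon) rmorph1.
have sPb : size Pb = d.+1.
  by rewrite /Pb size_map_poly_id0 ?hsize // (monicP hmon) rmorph1 oner_neq0.
have Pb0 : Pb != 0 by rewrite -size_poly_gt0 sPb.
have y0 : y != 0.
  by apply/eqP => y0; move: (htr _ Pb0); rewrite -hy y0 expr2 mul0r eqxx.
have Dx1 : D x1 = - x1 ^+ 2.
  by rewrite (DV hD) // hDx /x1 exprVn; field.
have t0 : t != 0 by rewrite /t mulf_neq0 // invr_eq0 expf_neq0.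
have Dpow : forall (a : K) n, D (a ^+ (n * p)) = 0.
  by move=> a n; rewrite (DX hD) mulrnA (mulrn_pchar chK).
have DpowP : forall (a : K), D (a ^+ p) = 0.
  by move=> a; rewrite (DX hD) (mulrn_pchar chK).
have Dh : D h = x ^+ (i * p) * ((evp iota u^`() x + x ^+ (2 * p) * (evp iota v^`() x1 * D x1)) / y ^+ p).
  rewrite /h DM Dpow mulr0 addr0; congr (_ * _).
  rewrite DM (DV hD) ?expf_neq0 // DpowP mul0r oppr0 mulr0 add0r mulrC; congr (_ * _).
  by rewrite DD DM (Dpow x 2) mulr0 addr0 !(D_evp hD) hDx mulr1.
have eId : fV - fU + D h = 0.
  rewrite Dh /fV /fU Dx1 /x1 /t.
  set c := x ^+ (i * p); set s := x ^+ p; set a := x ^+ (p * (g - 1 - i)).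
  set U' := evp iota u^`() x; set V' := evp iota v^`() x^-1.
  have ep : p = (p - 1).+1 by rewrite subn1 prednK // ltnW // ltnW.
  have e1 : x ^+ (p - 1) = s / x by rewrite /s {2}ep exprSr mulfK.
  have e2 : y ^+ (p - 1) = y ^+ p / y by rewrite {2}ep exprSr mulfK.
  have e3 : forall z : K, z != 0 -> z ^+ (p - 1) = z ^+ p / z.
    by move=> z z0; rewrite {2}ep exprSr mulfK.
  have e4 : x ^+ (2 * p) = s ^+ 2 by rewrite mulnC exprM.
  have e5 : (x ^+ (g + 1)) ^+ p = a * c * s ^+ 2.
    rewrite -exprM -!exprM -!exprD; congr (_ ^+ _); have eg : (g + 1 = (g - 1 - i) + i + 2)%N by move: hig; lia.
    rewrite eg !mulnDl !(mulnC p); lia.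
  rewrite !exprVn e1 e4 (e3 _ y0) (e3 (y / x ^+ (g + 1))) ?mulf_neq0 ?invr_eq0 ?expf_neq0 //.
  rewrite expr_div_n e5 /a.
  have s0 : s != 0 by rewrite expf_neq0.
  have c0 : c != 0 by rewrite expf_neq0.
  have a0 : x ^+ (p * (g - 1 - i)) != 0 by rewrite expf_neq0.
  have G0 : x ^+ (g + 1) != 0 by rewrite expf_neq0.
  have Y0 : y ^+ p != 0 by rewrite expf_neq0.
  move: s0 c0 a0 G0 Y0.
  set A := x ^+ (p * (g - 1 - i)); set G := x ^+ (g + 1); set Y := y ^+ p.
  move=> s0 c0 a0 G0 Y0.
  by field; rewrite Y0 x0 y0 G0 s0 c0 a0.
have copP : coprimep Pb Pb^`() by move: hsep; rewrite unlock.
have ep1 : p.-1 = m.*2 by rewrite hpm.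
have ep2 : (p - 1)%N = m.*2 by rewrite subn1 hpm.
have em : m.*2 = (m.*2.-1).+1 by rewrite prednK // double_gt0.
have fUreg : regular_form iota D x y fU.
  have R1 := deriv_rel (F := P2) chp hker hsig hmpP.
  rewrite -/Pb in R1.
  have dv : Pb ^+ p.-1 %| 'X^(p.-1) + u^`().
    have cop : coprimep (Pb ^+ p.-1) (Pb^`() ^+ p) by rewrite coprimep_expl // coprimep_expr.
    by rewrite -(Gauss_dvdpr _ cop) R1 dvdp_mulr.
  set r := ('X^(p.-1) + u^`()) %/ Pb ^+ p.-1.
  have er : r * Pb ^+ p.-1 = 'X^(p.-1) + u^`() := divpK dv.
  have ev : x ^+ (p - 1) + evp iota u^`() x = evp iota r x * (y ^+ 2) ^+ p.-1.
    have := congr1 (fun q => evp iota q x) er.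
    by rewrite /evp !rmorphD !rmorphM !rmorphXn /= map_polyX !hornerE -/(evp iota Pb x) -hy subn1 => ->.
  exists [:: (evp iota ('X^(i * p) * r) x * y ^+ (m.*2.-1), x)]; split.
    move=> ab; rewrite inE => /eqP -> /=; split; first exact: in_coord_mon.
    by have := in_coord_mon iota x y 'X 0; rewrite expr0 mulr1 /evp map_polyX hornerX.
  rewrite big_seq1 /= hDx mulr1 /fU ev ep1 ep2 -exprAC.
  rewrite /evp rmorphM /= map_polyXn hornerM hornerXn -/(evp iota r x).
  set Y := y ^+ m.*2.-1.
  have Y0 : Y != 0 by rewrite expf_neq0.
  have eY : y ^+ m.*2 = Y * y by rewrite /Y -exprSr -em.
  by rewrite eY; field; rewrite Y0 y0.
have hmapQ : map_poly pi Q2 = Qb by exact: (Rv_map pi d.+1 P2).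
have sPbK : size (map_poly iota Pb) = d.+1 by rewrite size_map_poly.
have evQ : evp iota Qb x1 = t ^+ 2.
  have -> : evp iota Qb x1 = (Rv d.+1 (map_poly iota Pb)).[x^-1] by rewrite /evp (Rv_map iota d.+1 Pb).
  rewrite Rv_horner // ?sPbK // -/(evp iota Pb x) -hy /t expr_div_n -exprM.
  have -> : ((g + 1) * 2 = d.+1)%N by rewrite /d; lia.
  by rewrite mulrC.
have fVreg : regular_form iota D x1 t fV.
  have hmpQ' : is_mp p pi ((map_poly pi Q2)^`() ^+ p * v - 2%:R * beta * (map_poly pi Q2) ^+ p)
             (Q2 ^+ p - ((map_poly sigma Q2) \Po 'X^p)) by rewrite hmapQ.
  have R1 := deriv_rel (F := Q2) chp hker hsig hmpQ'.
  rewrite hmapQ in R1.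
  have copQ : coprimep Qb Qb^`() by exact: (coprime_Rv sPb lP copP).
  have dv : Qb ^+ p.-1 %| 'X^(p.-1) + v^`().
    have cop : coprimep (Qb ^+ p.-1) (Qb^`() ^+ p) by rewrite coprimep_expl // coprimep_expr.
    by rewrite -(Gauss_dvdpr _ cop) R1 dvdp_mulr.
  set r := ('X^(p.-1) + v^`()) %/ Qb ^+ p.-1.
  have er : r * Qb ^+ p.-1 = 'X^(p.-1) + v^`() := divpK dv.
  have ev : x1 ^+ (p - 1) + evp iota v^`() x1 = evp iota r x1 * (t ^+ 2) ^+ p.-1.
    have := congr1 (fun q => evp iota q x1) er.
    by rewrite /evp !rmorphD !rmorphM !rmorphXn /= map_polyX !hornerE -/(evp iota Qb x1) evQ subn1 => ->.
  exists [:: (evp iota (- ('X^(p * (g - 1 - i)) * r)) x1 * t ^+ (m.*2.-1), x1)]; split.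
    move=> ab; rewrite inE => /eqP -> /=; split; first exact: in_coord_mon.
    by have := in_coord_mon iota x1 t 'X 0; rewrite expr0 mulr1 /evp map_polyX hornerX.
  rewrite big_seq1 /= /fV ev ep1 ep2 -exprAC.
  rewrite /evp rmorphN rmorphM /= map_polyXn hornerN hornerM hornerXn -/(evp iota r x1).
  set T := t ^+ m.*2.-1.
  have T0 : T != 0 by rewrite expf_neq0.
  have eT : t ^+ m.*2 = T * t by rewrite /T -exprSr -em.
  by rewrite eT; field; rewrite T0 t0.
have hmapQ2 : Q2 = Rv d.+1 P2 by [].
have sP2 : (size P2 <= d.+2)%N by rewrite hsize.
set N := (p * d.+1)%N.
have p0 : (0 < p)%N by apply: ltnW; apply: ltnW.
have sms : (size (map_poly sigma P2) <= d.+1)%N.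
  by rewrite /map_poly; apply: leq_trans (size_poly _ _) _; rewrite hsize.
have eQW : Q2 ^+ p - (map_poly sigma Q2 \Po 'X^p) =
    Rv N (P2 ^+ p - (map_poly sigma P2 \Po 'X^p)).
  by rewrite RvB /N RvX // Rv_comp // ?(leq_trans sms) // Rv_map.
have [LP [hLP hRP]] := hmpP.
have [LQ [hLQ hRQ]] := hmpQ.
have eTQ : map_poly pi LQ = Rv N (map_poly pi LP).
  have e0 : p%:R *: (LQ - Rv N LP) = 0 by rewrite scalerBr -RvZ -hRP -hRQ eQW subrr.
  rewrite -Rv_map; apply/eqP; rewrite -subr_eq0 -rmorphB; apply/eqP.
  apply/polyP => j; rewrite coef_map coef0 /=; apply: hker.
  by have := congr1 (fun P : {poly W} => P`_j) e0; rewrite coefZ coef0.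
have sB : (size (P2 ^+ p - (map_poly sigma P2 \Po 'X^p))%R <= N.+1)%N.
  apply: leq_trans (size_polyD _ _) _; rewrite size_polyN geq_max; apply/andP; split.
    by apply: leq_trans (size_poly_exp_leq _ _) _; rewrite hsize /N mulnC ltnS leq_mul2l /= leqnSn orbT.
  apply: leq_trans (size_comp_poly_leq _ _) _; rewrite size_polyXn /= ltnS /N mulnC leq_mul2l.
  by apply/orP; right; apply: leq_trans (leq_pred _) sms.
have sTP : (size (map_poly pi LP) <= N.+1)%N.
  apply/leq_sizeP => j hj; rewrite coef_map /=; apply: hker.
  by rewrite -coefZ -hRP; apply: (leq_sizeP _ _ sB j hj).
have x10 : x1 != 0 by rewrite invr_eq0.
have evQ' : evp iota Qb x1 = x1 ^+ d.+1 * evp iota Pb x.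
  have -> : evp iota Qb x1 = (Rv d.+1 (map_poly iota Pb)).[x^-1] by rewrite /evp (Rv_map iota d.+1 Pb).
  by rewrite Rv_horner // ?sPbK // exprVn.
set Px := evp iota Pb x; set Pd := evp iota Pb^`() x; set Qd := evp iota Qb^`() x1.
set U := evp iota u x; set V := evp iota v x1; set A := evp iota alpha x; set B := evp iota beta x1.
have eQd : Qd = x1 ^+ d * ((d.+1)%:R * Px - x * Pd).
  have E := D_evp hD Qb x1.
  rewrite evQ' DM (DX hD) Dx1 (D_evp hD) hDx mulr1 -/Qd -/Pd /= in E.
  have n0 : - x1 ^+ 2 != 0 by rewrite oppr_eq0 expf_neq0.
  apply: (mulIf n0); rewrite -E -mulr_natr exprSr -/Px /x1.
  by set z := x^-1 ^+ d; field.
have E1 : Qd ^+ p * V - 2%:R * B * (evp iota Qb x1) ^+ p = x ^- N * (Pd ^+ p * U - 2%:R * A * Px ^+ p).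
  have := congr1 (fun q => evp iota q x1) eTQ; rewrite /= hLQ.
  have -> : evp iota (Rv N (map_poly pi LP)) x1 = (Rv N (map_poly iota (map_poly pi LP))).[x^-1].
    by rewrite /evp Rv_map.
  rewrite Rv_horner // ?size_map_poly // -/(evp _ _ x) hLP.
  rewrite /evp !(rmorphB, rmorphM, rmorphXn, rmorph_nat) /= !hornerE.
  by move=> E0; exact: E0.
have frob : forall a b : K, (a - b) ^+ p = a ^+ p - b ^+ p.
  by move=> a b; rewrite -!(pFrobenius_autE chK) rmorphB.
set c := ((d.+1)%:R : K).
have key : Pd ^+ p * (U + x ^+ (2 * p) * V) = Px ^+ p * (c ^+ p * x ^+ p * V - 2%:R * B + 2%:R * A).
  rewrite evQ' eQd /x1 !exprMn frob !exprMn !exprVn exprSr exprMn in E1.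
  have eN : x ^+ N = (x ^+ d) ^+ p * x ^+ p by rewrite /N mulnC exprM exprSr exprMn.
  rewrite eN in E1.
  rewrite mulnC exprM.
  move: E1; set s := x ^+ p; set w := (x ^+ d) ^+ p.
  have s0 : s != 0 by rewrite expf_neq0.
  have w0 : w != 0 by rewrite !expf_neq0.
  move=> E1; rewrite -/Px -/c in E1.
  apply/eqP; rewrite -subr_eq0; apply/eqP.
  have -> : Pd ^+ p * (U + s ^+ 2 * V) - Px ^+ p * (c ^+ p * s * V - 2%:R * B + 2%:R * A) =
    (w * s) * ((w * s)^-1 * (Pd ^+ p * U - 2%:R * A * Px ^+ p) -
     (w^-1 * (c ^+ p * Px ^+ p - s * Pd ^+ p) * V - 2%:R * B * ((w * s)^-1 * Px ^+ p))).
    by field; rewrite w0 s0.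
  by rewrite -E1 subrr mulr0.
set nv := size v; set nb := size beta.
set rv := Rv nv v; set rb := Rv nb beta.
have evrv : evp iota rv x = x ^+ nv * V.
  have -> : evp iota rv x = (Rv nv (map_poly iota v)).[x1^-1] by rewrite /evp Rv_map /x1 invrK.
  rewrite Rv_horner // ?size_map_poly // -/(evp iota v x1) -/V.
  by rewrite /x1 exprVn invrK.
have evrb : evp iota rb x = x ^+ nb * B.
  have -> : evp iota rb x = (Rv nb (map_poly iota beta)).[x1^-1] by rewrite /evp Rv_map /x1 invrK.
  rewrite Rv_horner // ?size_map_poly // -/(evp iota beta x1) -/B.
  by rewrite /x1 exprVn invrK.
set M := (nv + nb)%N.
set C := (((d.+1)%:R : {poly k}) ^+ p).
set G := 'X^M * u + 'X^(2 * p + nb)%N * rv.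
set H := C * 'X^(nb + p)%N * rv - 2%:R * ('X^nv * rb) + 2%:R * ('X^M * alpha).
have evG : evp iota G x = x ^+ M * (U + x ^+ (2 * p) * V).
  rewrite /G /evp !(rmorphD, rmorphM, rmorphXn) /= map_polyX !hornerE.
  rewrite -/(evp iota rv x) evrv -/(evp iota u x) -/U /M !exprD; ring.
have evH : evp iota H x = x ^+ M * (c ^+ p * x ^+ p * V - 2%:R * B + 2%:R * A).
  have evp1 : forall z, evp iota 1 z = 1 by move=> z; rewrite /evp rmorph1 hornerC.
  rewrite /H /C /= !(evpD, evpB, evpN, evpM, evpXn, evp_exp, evp_nat, evp1) evrv evrb -/A -/c /M !exprD.
  ring.
have eGH : Pb^`() ^+ p * G = Pb ^+ p * H.
  apply/eqP; rewrite -subr_eq0; apply/negPn/negP => /htr.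
  by rewrite evpB !evpM !evp_exp evG evH -/Pd -/Px mulrCA (mulrCA (Px ^+ p)) key subrr eqxx.

have dvG : Pb ^+ p %| G.
  have cop : coprimep (Pb ^+ p) (Pb^`() ^+ p) by rewrite coprimep_expl // coprimep_expr.
  by rewrite -(Gauss_dvdpr _ cop) eGH dvdp_mulr.
set S := G %/ Pb ^+ p.
have eS : S * Pb ^+ p = G := divpK dvG.
have hloc : in_localization iota x y h.
  exists M, (evp iota ('X^(i * p) * S) x * y ^+ p); split; first exact: in_coord_mon.
  have e1 := congr1 (fun q => evp iota q x) eS; rewrite /= evpM evp_exp evG -/Px -(hy : y ^+ 2 = Px) in e1.
  have xM : x ^+ M != 0 by rewrite expf_neq0.
  have eUV : U + x ^+ (2 * p) * V = evp iota S x * (y ^+ 2) ^+ p / x ^+ M.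
    by rewrite e1; field.
  rewrite /h -/U -/V eUV evpM evpXn -exprM mulnC exprM (mulnC 2%N p) exprM.
  have Yp : y ^+ p != 0 by rewrite expf_neq0.
  by field; rewrite Yp xM.
split.
- exact: fUreg.
- exact: fVreg.
- exact: hloc.
- exact: eId.
Qed.
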